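(* Let $\mathbb{M}^3$ be either the Euclidean space $\mathbb{R}^3$ or the round unit sphere $\mathbb{S}^3$. Then every complete end of revolution in $\mathbb{M}^3$ is a parabolic end.
   Context: Let $\mathbb{M}^3(\kappa)$ denote the simply connected $3$-dimensional space form of constant sectional curvature $\kappa$. A complete end of revolution in $\mathbb{M}^3(\kappa)$ is defined as follows: take a geodesic $\sigma$ of $\mathbb{M}^3(\kappa)$, a totally geodesic surface $\mathbb{M}^2(\kappa)\subset\mathbb{M}^3(\kappa)$ containing $\sigma$, and a smooth regular curve $\beta:[0,\infty)\to\mathbb{M}^2(\kappa)$ of infinite length which does not intersect $\sigma$ (so $\beta$ lies in one open half of $\mathbb{M}^2(\kappa)\setminus\sigma$). The end is $E=\{R_\theta(\beta(t)) : t\ge 0,\ \theta\in[0,2\pi)\}$, where $\{R_\theta\}$ is the group (isomorphic to $SO(2)$) of orientation-preserving isometries of $\mathbb{M}^3(\kappa)$ fixing $\sigma$ pointwise; it is the image of the immersion $(t,\theta)\mapsto R_\theta(\beta(t))$ of $[0,\infty)\times\mathbb{S}^1$ and carries the induced Riemannian metric. An end $E$ (a surface with compact boundary) is parabolic if every bounded harmonic function on $E$ is determined by its boundary values. *)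

(* Defs.v *)
From HB Require Import structures.
From mathcomp Require Import all_boot all_order all_algebra.
From mathcomp Require Import all_classical all_reals all_analysis.
Set Implicit Arguments. Unset Strict Implicit. Unset Printing Implicit Defensive.
Import Order.TTheory GRing.Theory Num.Theory.
Import numFieldNormedType.Exports.
Local Open Scope classical_set_scope.
Local Open Scope ring_scope.

Section Defs.
Variable R : realType.

Definition dotv (N : nat) (u v : 'I_N -> R) : R := \sum_(i < N) u i * v i.

Definition orthonormal3 (e1 e2 e3 : 'I_3 -> R) : Prop :=
  [/\ dotv e1 e1 = 1, dotv e2 e2 = 1, dotv e3 e3 = 1 &
   [/\ dotv e1 e2 = 0, dotv e1 e3 = 0 & dotv e2 e3 = 0]].

Definition orthonormal4 (e1 e2 e3 e4 : 'I_4 -> R) : Prop :=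
  [/\ dotv e1 e1 = 1, dotv e2 e2 = 1, dotv e3 e3 = 1, dotv e4 e4 = 1 &
   [/\ dotv e1 e2 = 0, dotv e1 e3 = 0, dotv e1 e4 = 0,
       dotv e2 e3 = 0 & [/\ dotv e2 e4 = 0 & dotv e3 e4 = 0]]].

Definition smooth_fun (f : R -> R) : Prop :=
  forall (n : nat) (x : R), derivable (iter n (@derive1 R R) f) x 1.

Definition smooth_curve (N : nat) (beta : R -> 'I_N -> R) : Prop :=
  forall i : 'I_N, smooth_fun (fun t => beta t i).

Definition velocity (N : nat) (beta : R -> 'I_N -> R) (t : R) : 'I_N -> R :=
  fun i => derive1 (fun s => beta s i) t.

Definition speed (N : nat) (beta : R -> 'I_N -> R) (t : R) : R :=
  Num.sqrt (dotv (velocity beta t) (velocity beta t)).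

Definition regular_curve (N : nat) (beta : R -> 'I_N -> R) : Prop :=
  forall t, 0 <= t -> velocity beta t <> (fun _ => 0).

Definition infinite_length (N : nat) (beta : R -> 'I_N -> R) : Prop :=
  (\int[lebesgue_measure]_(t in `[0%R, +oo[%classic) (speed beta t)%:E = +oo)%E.

(** ---------- Euclidean space R^3 ----------
   The geodesic sigma = { p + s e3 | s in R }, the totally geodesic plane
   M^2 = { p + a e1 + s e3 } containing it, and R_theta the rotation of
   angle theta about sigma (in the oriented plane spanned by e1, e2). *)
Definition rotE (p e1 e2 e3 : 'I_3 -> R) (th : R) (q : 'I_3 -> R) : 'I_3 -> R :=
  let c1 := dotv (fun k => q k - p k) e1 in
  let c2 := dotv (fun k => q k - p k) e2 in
  let c3 := dotv (fun k => q k - p k) e3 in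
  fun k => p k + (c1 * cos th - c2 * sin th) * e1 k
               + (c1 * sin th + c2 * cos th) * e2 k + c3 * e3 k.

Definition euclid_end_data (p e1 e2 e3 : 'I_3 -> R) (beta : R -> 'I_3 -> R) : Prop :=
  [/\ smooth_curve beta,
      regular_curve beta,
      infinite_length beta,
      (* beta lies in the totally geodesic plane M^2 through sigma *)
      (forall t, 0 <= t -> dotv (fun k => beta t k - p k) e2 = 0) &
      (forall t, 0 <= t -> forall s : R, beta t <> (fun k => p k + s * e3 k))].

Definition immersionE (p e1 e2 e3 : 'I_3 -> R) (beta : R -> 'I_3 -> R)
  : R -> R -> 'I_3 -> R := fun t th => rotE p e1 e2 e3 th (beta t).

(** ---------- Round unit sphere S^3 in R^4 ----------
   sigma = { cos s e3 + sin s e4 } (a great circle), M^2 = S^3 ∩ e2^⊥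
   (the totally geodesic 2-sphere containing sigma), R_theta the rotation
   of angle theta in the plane (e1, e2), fixing sigma pointwise. *)
Definition rotS (e1 e2 e3 e4 : 'I_4 -> R) (th : R) (q : 'I_4 -> R) : 'I_4 -> R :=
  let c1 := dotv q e1 in let c2 := dotv q e2 in
  let c3 := dotv q e3 in let c4 := dotv q e4 in
  fun k => (c1 * cos th - c2 * sin th) * e1 k
           + (c1 * sin th + c2 * cos th) * e2 k + c3 * e3 k + c4 * e4 k.

Definition sphere_end_data (e1 e2 e3 e4 : 'I_4 -> R) (beta : R -> 'I_4 -> R) : Prop :=
  [/\ smooth_curve beta,
      regular_curve beta,
      infinite_length beta,
      (forall t, 0 <= t -> dotv (beta t) (beta t) = 1 /\ dotv (beta t) e2 = 0) &
      (forall t, 0 <= t -> forall s : R,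
          beta t <> (fun k => cos s * e3 k + sin s * e4 k))].

Definition immersionS (e1 e2 e3 e4 : 'I_4 -> R) (beta : R -> 'I_4 -> R)
  : R -> R -> 'I_4 -> R := fun t th => rotS e1 e2 e3 e4 th (beta t).

(** ---------- Harmonic functions on a parametrized end ----------
   The end is [0,oo) x S^1 (coordinates (t, theta), theta mod 2pi) with the
   metric induced by the immersion X : (t, theta) |-> X t theta in R^N. *)
Definition pd1 (f : R -> R -> R) (t th : R) : R := derive1 (fun s => f s th) t.
Definition pd2 (f : R -> R -> R) (t th : R) : R := derive1 (fun s => f t s) th.

Definition g11 N (X : R -> R -> 'I_N -> R) t th :=
  dotv (fun i => pd1 (fun a b => X a b i) t th) (fun i => pd1 (fun a b => X a b i) t th).
Definition g12 N (X : R -> R -> 'I_N -> R) t th :=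
  dotv (fun i => pd1 (fun a b => X a b i) t th) (fun i => pd2 (fun a b => X a b i) t th).
Definition g22 N (X : R -> R -> 'I_N -> R) t th :=
  dotv (fun i => pd2 (fun a b => X a b i) t th) (fun i => pd2 (fun a b => X a b i) t th).
Definition volg N (X : R -> R -> 'I_N -> R) t th :=
  Num.sqrt (g11 X t th * g22 X t th - g12 X t th ^+ 2).

Definition interior : set (R * R) := [set q | 0 < q.1].
Definition closed_end : set (R * R) := [set q | 0 <= q.1].

Definition jcont (f : R -> R -> R) (A : set (R * R)) : Prop :=
  {within A, continuous (fun q : R * R => f q.1 q.2)}.

Definition C2_interior (u : R -> R -> R) : Prop :=
  [/\ (forall t th, 0 < t ->
        [/\ derivable (fun s => u s th) t 1, derivable (fun s => u t s) th 1,
            derivable (fun s => pd1 u s th) t 1, derivable (fun s => pd1 u t s) th 1 &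
            derivable (fun s => pd2 u s th) t 1 /\ derivable (fun s => pd2 u t s) th 1]),
      jcont (pd1 u) interior, jcont (pd2 u) interior,
      jcont (pd1 (pd1 u)) interior &
      [/\ jcont (pd2 (pd1 u)) interior, jcont (pd1 (pd2 u)) interior &
           jcont (pd2 (pd2 u)) interior]].

(** Laplace-Beltrami operator of the induced metric, in divergence form:
    Delta u = (1/sqrt g) d_i (sqrt g g^{ij} d_j u). *)
Definition laplace_beltrami N (X : R -> R -> 'I_N -> R) (u : R -> R -> R) (t th : R) : R :=
  (pd1 (fun a b => (g22 X a b * pd1 u a b - g12 X a b * pd2 u a b) / volg X a b) t th
   + pd2 (fun a b => (g11 X a b * pd2 u a b - g12 X a b * pd1 u a b) / volg X a b) t th)
  / volg X t th.

Definition harmonic_on_end N (X : R -> R -> 'I_N -> R) (u : R -> R -> R) : Prop :=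
  [/\ (forall t th, 0 <= t -> u t (th + 2 * pi) = u t th),
      jcont u closed_end,
      C2_interior u &
      (forall t th, 0 < t -> laplace_beltrami X u t th = 0)].

Definition bounded_on_end (u : R -> R -> R) : Prop :=
  exists M : R, forall t th, 0 <= t -> `|u t th| <= M.

Definition parabolic_end N (X : R -> R -> 'I_N -> R) : Prop :=
  forall u v : R -> R -> R,
    bounded_on_end u -> bounded_on_end v ->
    harmonic_on_end X u -> harmonic_on_end X v ->
    (forall th, u 0 th = v 0 th) ->
    forall t th, 0 <= t -> u t th = v t th.

End Defs.

(* Main.v *)
Require Import Defs.
From HB Require Import structures.
From mathcomp Require Import all_boot all_order all_algebra.
From mathcomp Require Import all_classical all_reals all_analysis.
From mathcomp Require Import ring lra.
Set Implicit Arguments. Unset Strict Implicit. Unset Printing Implicit Defensive.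
Import Order.TTheory GRing.Theory Num.Theory.
Import numFieldNormedType.Exports.
Local Open Scope classical_set_scope.
Local Open Scope ring_scope.

Section M1.
Variable R : realType.

Lemma max2 (f : R -> R) (c d : R) : 0 < d ->
  (forall y, `|y - c| < d -> f y <= f c) ->
  (forall y, `|y - c| < d -> derivable f y 1) ->
  derivable (derive1 f) c 1 ->
  derive1 f c = 0 /\ derive1 (derive1 f) c <= 0.
Proof.
move=> d0 fmax fder gder.
have inI y : y \in `](c - d), (c + d)[%R -> `|y - c| < d.
  by rewrite in_itv /= => /andP[h1 h2]; rewrite ltr_norml; apply/andP; split; lra.
have f'0 : derive1 f c = 0.
  have cI : c \in `](c - d), (c + d)[%R by rewrite in_itv /=; apply/andP; split; lra.
  have := @derive1_at_max R f (c - d) (c + d) c ltac:(lra) (fun t ht => fder t (inI t ht)) cI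
     (fun t ht => fmax t (inI t ht)).
  by move=> H; rewrite derive1E; apply: derive_val.
split => //.
rewrite leNgt; apply/negP => L0.
set g := derive1 f in gder L0 f'0 *.
have HL' : (fun h : R => h^-1 *: (g (h *: 1 + c) - g c)) @ 0^' --> 'D_1 g c.
  exact: gder.
rewrite derive1E in L0.
have := @cvgr_gt _ _ _ _ _ _ HL' _ L0.

case=> e /= e0 He.
pose h := Num.min e d / 2.
have hpos : 0 < h by rewrite /h divr_gt0 // lt_min e0 d0.
have [mle mld] : Num.min e d <= e /\ Num.min e d <= d.
  by move: (le_refl (Num.min e d)); rewrite le_min => /andP.
have he : h < e by rewrite /h; lra.
have hd : h < d by rewrite /h; lra.
have gpos y : 0 < y -> y <= h -> 0 < g (y + c).
  move=> y0 yh.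
  have := He y; rewrite /ball /= sub0r normrN gtr0_norm // => /(_ ltac:(lra)).
  move=> /(_ (lt0r_neq0 y0)); rewrite f'0 subr0 /GRing.scale /= mulr1.
  by rewrite pmulr_rgt0 // invr_gt0.
have ch : c < c + h by lra.
have := @MVT R f g c (c + h) ch.
case.
- move=> x; rewrite in_itv /= => /andP[x1 x2].
  rewrite /g derive1E; apply: derivableP; apply: fder.
  by rewrite ltr_norml; apply/andP; split; lra.
- apply: derivable_within_continuous => x; rewrite in_itv /= => /andP[x1 x2].
  by apply: fder; rewrite ltr_norml; apply/andP; split; lra.
move=> xi; rewrite in_itv /= => /andP[x1 x2] Heq.
have := gpos (xi - c) ltac:(lra) ltac:(lra); rewrite subrK => gxi.
have : f (c + h) <= f c by apply: fmax; rewrite addrAC subrr add0r gtr0_norm.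
have : 0 < g xi * (c + h - c) by apply: mulr_gt0; lra.
lra.
Qed.

Lemma derB3 (f g h : R -> R) x : derivable f x 1 -> derivable g x 1 ->
  derivable h x 1 ->
  derivable (fun y => f y - g y - h y) x 1 /\
  derive1 (fun y => f y - g y - h y) x = derive1 f x - derive1 g x - derive1 h x.
Proof.
move=> df dg dh.
have H := is_deriveB (is_deriveB (derivableP df) (derivableP dg)) (derivableP dh).
split; first exact: (@ex_derive _ _ _ _ _ _ _ H).
rewrite (derive1E f x) (derive1E g x) (derive1E h x).
rewrite -(@derive_val _ _ _ _ _ _ _ H).
exact: (derive1E (f - g - h) x).
Qed.

Lemma derB2 (f g : R -> R) x : derivable f x 1 -> derivable g x 1 ->
  derivable (fun y => f y - g y) x 1 /\
  derive1 (fun y => f y - g y) x = derive1 f x - derive1 g x.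
Proof.
move=> df dg.
have H := is_deriveB (derivableP df) (derivableP dg).
split; first exact: (@ex_derive _ _ _ _ _ _ _ H).
rewrite (derive1E f x) (derive1E g x).
rewrite -(@derive_val _ _ _ _ _ _ _ H).
exact: (derive1E (f - g) x).
Qed.

Lemma derD2 (f g : R -> R) x : derivable f x 1 -> derivable g x 1 ->
  derivable (fun y => f y + g y) x 1 /\
  derive1 (fun y => f y + g y) x = derive1 f x + derive1 g x.
Proof.
move=> df dg.
have H := is_deriveD (derivableP df) (derivableP dg).
split; first exact: (@ex_derive _ _ _ _ _ _ _ H).
rewrite (derive1E f x) (derive1E g x).
rewrite -(@derive_val _ _ _ _ _ _ _ H).
exact: (derive1E (f + g) x).
Qed.

Lemma derivable_cst1 (a x : R) : derivable (fun _ : R => a) x 1.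
Proof. exact: derivable_cst. Qed.

Lemma derive1_cst1 (a x : R) : derive1 (fun _ : R => a) x = 0.
Proof. rewrite (derive1E (fun _ : R => a) x); exact: derive_cst. Qed.

Lemma derMl (f : R -> R) (a x : R) : derivable f x 1 ->
  derivable (fun y => a * f y) x 1 /\ derive1 (fun y => a * f y) x = a * derive1 f x.
Proof.
move=> df.
have H := is_deriveZ a (derivableP df).
split; first exact: (@ex_derive _ _ _ _ _ _ _ H).
rewrite (derive1E f x).
rewrite -[a * _](@derive_val _ _ _ _ _ _ _ H).
exact: (derive1E (a \*: f) x).
Qed.

Lemma derM (f g : R -> R) x : derivable f x 1 -> derivable g x 1 ->
  derivable (fun y => f y * g y) x 1 /\
  derive1 (fun y => f y * g y) x = derive1 f x * g x + f x * derive1 g x.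
Proof.
move=> df dg.
have H := is_deriveM (derivableP df) (derivableP dg).
split; first exact: (@ex_derive _ _ _ _ _ _ _ H).
rewrite (derive1E f x) (derive1E g x).
have -> : 'D_1 f x * g x + f x * 'D_1 g x = f x *: 'D_1 g x + g x *: 'D_1 f x.
  by rewrite addrC; congr (_ + _); exact: mulrC.
rewrite -(@derive_val _ _ _ _ _ _ _ H).
exact: (derive1E (f * g) x).
Qed.


Lemma nb (y c d lo hi : R) : `|y - c| < d -> d <= c - lo -> d <= hi - c ->
  lo < y /\ y < hi.
Proof. rewrite ltr_norml => /andP[h1 h2] h3 h4; split; lra. Qed.

Lemma minpos (a b : R) : 0 < a -> 0 < b ->
  [/\ 0 < Num.min a b, Num.min a b <= a & Num.min a b <= b].
Proof.
move=> a0 b0; move: (le_refl (Num.min a b)); rewrite {1}le_min => /andP[h1 h2].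
by split => //; rewrite lt_min a0 b0.
Qed.

Lemma alg (a K mm m1 p eps eta u1 u2 u3 v1 v2 v3 : R) :
  0 < K -> 0 < mm -> 0 < eta ->
  a * u1 + K * u2 + mm * u3 = 0 -> a * v1 + K * v2 + mm * v3 = 0 ->
  u1 - v1 - (eps * mm - 2 * eta * (p * mm)) = 0 ->
  u2 - v2 - (eps * m1 - 2 * eta * (mm * mm + p * m1)) <= 0 ->
  u3 - v3 <= 0 -> a * mm + K * m1 = 0 -> False.
Proof.
move=> K0 mm0 eta0 Eu Ev F0 h2 h3 km.
have h2' : K * (u2 - v2 - (eps * m1 - 2 * eta * (mm * mm + p * m1))) <= 0.
  by apply: mulr_ge0_le0 => //; apply: ltW.
have h3' : mm * (u3 - v3) <= 0 by apply: mulr_ge0_le0 => //; apply: ltW.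
have D1 : u1 - v1 = eps * mm - 2 * eta * (p * mm) by lra.
have e : a * (u1 - v1) + K * (u2 - v2) + mm * (u3 - v3) = 0.
  have -> : a * (u1 - v1) + K * (u2 - v2) + mm * (u3 - v3) =
    (a * u1 + K * u2 + mm * u3) - (a * v1 + K * v2 + mm * v3) by ring.
  by rewrite Eu Ev subrr.
rewrite D1 in e.
have e2 : a * (eps * mm - 2 * eta * (p * mm)) + K * (eps * m1 - 2 * eta * (mm * mm + p * m1))
   = (eps - 2 * eta * p) * (a * mm + K * m1) - 2 * eta * (K * (mm * mm)) by ring.
rewrite km mulr0 sub0r in e2.
have : 0 < 2 * eta * (K * (mm * mm)) by apply: mulr_gt0; [lra | apply: mulr_gt0 => //; apply: mulr_gt0].
have e3 : K * (u2 - v2) = K * (u2 - v2 - (eps * m1 - 2 * eta * (mm * mm + p * m1)))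
   + K * (eps * m1 - 2 * eta * (mm * mm + p * m1)) by ring.
lra.
Qed.


Lemma der_sqrt (f : R -> R) x : derivable f x 1 -> 0 < f x ->
  derivable (fun y => Num.sqrt (f y)) x 1.
Proof.
move=> df fx0.
have : derivable (Num.sqrt \o f) x 1.
  apply/derivable1_diffP; apply: differentiable_comp; first exact/derivable1_diffP.
  apply/derivable1_diffP; exact: (@ex_derive _ _ _ _ _ _ _ (is_derive1_sqrt fx0)).
by [].
Qed.

Lemma der_div (f g : R -> R) x : derivable f x 1 -> derivable g x 1 -> g x != 0 ->
  derivable (fun y => f y / g y) x 1.
Proof.
move=> df dg g0.
have dV := derivableV g0 dg.
by have [] := derM df dV.
Qed.

End M1.

Section M2.
Variable R : realType.

Definition Eop (k m : R -> R) (u : R -> R -> R) (t th : R) : R :=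
  derive1 k t * pd1 u t th + k t * pd1 (pd1 u) t th + m t * pd2 (pd2 u) t th.

Definition good (k m : R -> R) (u : R -> R -> R) : Prop :=
  [/\ (forall t th, 0 <= t -> u t (th + 2 * pi) = u t th),
      jcont u (@closed_end R),
      C2_interior u,
      bounded_on_end u &
      (forall t th, 0 < t -> Eop k m u t th = 0)].

Lemma core (k m phi : R -> R) (u v : R -> R -> R) :
  (forall t, 0 < t -> 0 < k t /\ 0 < m t) ->
  (forall t, 0 < t -> derivable k t 1 /\ derivable m t 1 /\
                      derive1 k t * m t + k t * derive1 m t = 0) ->
  (forall t, 0 <= t -> derivable phi t 1) ->
  (forall t, 0 < t -> derive1 phi t = m t) ->
  phi 0 = 0 ->
  (forall t s, 0 <= t -> t <= s -> phi t <= phi s) ->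
  (forall B, exists T, 0 <= T /\ B <= phi T) ->
  good k m u -> good k m v ->
  (forall th, u 0 th = v 0 th) ->
  forall t th, 0 <= t -> u t th <= v t th.
Proof.
move=> kmpos kmder phider phi'm phi0 phimono phiunb [uper ucont uC2 [Mu hMu] uE]
  [vper vcont vC2 [Mv hMv] vE] uv0 t1 th1 t1ge.
have phige0 t : 0 <= t -> 0 <= phi t by move=> t0; rewrite -phi0; apply: phimono.
suff main : forall eps, 0 < eps -> u t1 th1 - v t1 th1 <= eps * phi t1.
  rewrite -subr_le0 leNgt; apply/negP => D0.
  set D := u t1 th1 - v t1 th1 in D0 main.
  have p0 := phige0 _ t1ge.
  have := main (D / (2 * (phi t1 + 1))) ltac:(apply: divr_gt0; lra).
  have -> : D / (2 * (phi t1 + 1)) * phi t1 = D * (phi t1 / (2 * (phi t1 + 1))) by rewrite mulrAC mulrA.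
  have : phi t1 / (2 * (phi t1 + 1)) < 1.
    by rewrite ltr_pdivrMr; lra.
  move=> h1 h2.
  have : D * (phi t1 / (2 * (phi t1 + 1))) < D * 1 by rewrite ltr_pM2l.
  lra.
move=> eps eps0.
have Mu0 : 0 <= Mu by apply: le_trans (hMu 0 0 (lexx _)).
have Mv0 : 0 <= Mv by apply: le_trans (hMv 0 0 (lexx _)).
pose M2 := Mu + Mv.
have [T0 [T0ge hT0]] := phiunb ((M2 + 1) / eps).
pose T := Num.max T0 t1 + 1.
have [T0T t1T] : T0 <= Num.max T0 t1 /\ t1 <= Num.max T0 t1.
  by move: (le_refl (Num.max T0 t1)); rewrite ge_max => /andP.
have Tpos : 0 < T by rewrite /T; lra.
pose P := phi T.
have PT0 : phi T0 <= P by apply: phimono; rewrite /T; lra.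
have epsP : M2 + 1 <= eps * P.
  rewrite mulrC -ler_pdivrMr //; exact: le_trans hT0 PT0.
pose eta := (2 * P ^+ 2 + 2)^-1.
have eta0 : 0 < eta by rewrite /eta invr_gt0; have := sqr_ge0 P; lra.
have etaP : eta * (P * P) <= 1 / 2.
  rewrite /eta mulrC ler_pdivrMr; last by have := sqr_ge0 P; lra.
  rewrite expr2; have := sqr_ge0 P; rewrite expr2; lra.
pose psi s := eps * phi s - eta * (phi s * phi s).
pose hf (q : R * R) := u q.1 q.2 - v q.1 q.2 - psi q.1.
pose K := `[0, T] `*` `[th1 - 2 * pi, th1 + 2 * pi].
have pi0 : 0 < pi := pi_gt0 R.
have Kc : compact K by apply: compact_setX; exact: segment_compact.
have inK a b : 0 <= a -> a <= T -> th1 - 2 * pi <= b -> b <= th1 + 2 * pi -> K (a, b).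
  by move=> h1 h2 h3 h4; split; rewrite /= in_itv /=; apply/andP; split.
have Kne : K !=set0 by exists (0, th1); apply: inK => //; lra.
have Ksub : K `<=` @closed_end R.
  by move=> [a b] [/= + _]; rewrite in_itv /= => /andP[].
have hfc : {within K, continuous hf}.
  have cu : {within K, continuous (fun q : R * R => u q.1 q.2)}
    := continuous_subspaceW Ksub ucont.
  have cv : {within K, continuous (fun q : R * R => v q.1 q.2)}
    := continuous_subspaceW Ksub vcont.
  have cp : {within K, continuous (fun q : R * R => psi q.1)}.
    apply: continuous_in_subspaceT => -[a b] /set_mem [/= + _].
    rewrite in_itv /= => /andP[a0 _].
    apply: continuous_comp; first exact: cvg_fst.
    have dpsi : derivable psi a 1.
      have [dphi2 _] := derM (phider a a0) (phider a a0).
      have [d1 _] := derMl eps (phider a a0).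
      have [d2 _] := derMl eta dphi2.
      by have [] := derB2 d1 d2.
    by apply/differentiable_continuous; rewrite -derivable1_diffP.
  move=> q; exact: (continuousB (continuousB (cu q) (cv q)) (cp q)).
have [[t0 b0] K0 hmax] := compact_EVT_max Kne Kc hfc.
have hmax' a b : 0 <= a -> a <= T -> th1 - 2 * pi <= b -> b <= th1 + 2 * pi ->
    hf (a, b) <= hf (t0, b0).
  by move=> h1 h2 h3 h4; apply: hmax; rewrite inE; apply: inK.
move: K0; rewrite inE => -[/=]; rewrite !in_itv /= => /andP[t0ge t0le] /andP[b0ge b0le].
suff hmax0 : hf (t0, b0) <= 0.
  have t1T' : t1 <= T by rewrite /T; lra.
  have := le_trans (hmax' t1 th1 t1ge t1T' ltac:(lra) ltac:(lra)) hmax0.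
  rewrite /hf /psi /=.
  have : 0 <= eta * (phi t1 * phi t1) by apply: mulr_ge0; [lra|apply: mulr_ge0; apply: phige0].
  lra.
have [->|t0ne0] := eqVneq t0 0.
  by rewrite /hf /psi /= uv0 phi0 !mulr0; lra.
have [->|t0neT] := eqVneq t0 T.
  rewrite /hf /psi /= -/P.
  have := hMu T b0 (ltW Tpos); have := hMv T b0 (ltW Tpos).
  rewrite !ler_norml => /andP[? ?] /andP[? ?].
  rewrite /M2 in epsP; lra.
have t0pos : 0 < t0 by rewrite lt_neqAle eq_sym t0ne0.
have t0lt : t0 < T by rewrite lt_neqAle t0neT.
exfalso.
have [bs [bs1 bs2 hbs]] : exists bs, [/\ th1 - 2 * pi < bs, bs < th1 + 2 * pi &
    hf (t0, bs) = hf (t0, b0)].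
  case: (ltP (th1 - 2 * pi) b0) => h1; case: (ltP b0 (th1 + 2 * pi)) => h2.
  - by exists b0.
  - exists th1; split; try lra.
    have -> : b0 = th1 + 2 * pi by lra.
    by rewrite /hf /= uper ?vper //; lra.
  - exists th1; split; try lra.
    have -> : b0 = th1 - 2 * pi by lra.
    rewrite /hf /=.
    have := uper t0 (th1 - 2 * pi) (ltW t0pos); rewrite subrK => ->.
    have := vper t0 (th1 - 2 * pi) (ltW t0pos); rewrite subrK => ->.
    by [].
  - lra.
have [uder _ _ _ _] := uC2.
have [vder _ _ _ _] := vC2.
pose dth := Num.min (bs - (th1 - 2 * pi)) (th1 + 2 * pi - bs).
have [dth0 mth1 mth2] : [/\ 0 < dth, dth <= bs - (th1 - 2 * pi) & dth <= th1 + 2 * pi - bs].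
  by apply: minpos; rewrite subr_gt0.
pose fth := fun b => u t0 b - v t0 b - psi t0.
have fthmax y : `|y - bs| < dth -> fth y <= fth bs.
  move=> hy; have [hy1 hy2] := nb hy mth1 mth2.
  have := hmax' t0 y t0ge t0le (ltW hy1) (ltW hy2).
  by rewrite -hbs.
have [du1 du2 du11 du12 [du21 du22]] := uder t0 bs t0pos.
have [dv1 dv2 dv11 dv12 [dv21 dv22]] := vder t0 bs t0pos.
have fthder y : derivable fth y 1.
  have [a1 a2 _ _ _] := uder t0 y t0pos.
  have [b1 b2 _ _ _] := vder t0 y t0pos.
  by have [] := derB3 a2 b2 (derivable_cst1 (a:=psi t0) (x:=y)).
have fth' : derive1 fth = fun b => pd2 u t0 b - pd2 v t0 b - 0.
  apply/funext => y.
  have [a1 a2 _ _ _] := uder t0 y t0pos.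
  have [b1 b2 _ _ _] := vder t0 y t0pos.
  have [_ ->] := derB3 a2 b2 (derivable_cst1 (a:=psi t0) (x:=y)).
  by rewrite derive1_cst1.
have [_ fth''] := max2 dth0 fthmax (fun y _ => fthder y)
  ltac:(rewrite fth'; exact: (derB3 du22 dv22 (derivable_cst1 (a:=0) (x:=bs))).1).
rewrite fth' (derB3 du22 dv22 (derivable_cst1 (a:=0) (x:=bs))).2 derive1_cst1 subr0 in fth''.
have dpsi s : 0 <= s -> derivable psi s 1.
  move=> s0.
  have [dphi2 _] := derM (phider s s0) (phider s s0).
  have [d1 _] := derMl eps (phider s s0).
  have [d2 _] := derMl eta dphi2.
  by have [] := derB2 d1 d2.
have psi' s : 0 < s -> derive1 psi s = eps * m s - (2 * eta) * (phi s * m s).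
  move=> s0.
  have [dphi2 e2] := derM (phider s (ltW s0)) (phider s (ltW s0)).
  have [d1 e1] := derMl eps (phider s (ltW s0)).
  have [d2 e3] := derMl eta dphi2.
  have [_ ->] := derB2 d1 d2.
  by rewrite e1 e3 e2 phi'm //; ring.
pose dt := Num.min t0 (T - t0).
have [dt0 mt1 mt2] : [/\ 0 < dt, dt <= t0 & dt <= T - t0].
  by apply: minpos; rewrite ?subr_gt0.
have mt1' : dt <= t0 - 0 by rewrite subr0.
pose ft := fun s => u s bs - v s bs - psi s.
have ftmax y : `|y - t0| < dt -> ft y <= ft t0.
  move=> hy; have [hy1 hy2] := nb hy mt1' mt2.
  have := hmax' y bs (ltW hy1) (ltW hy2) (ltW bs1) (ltW bs2).
  by rewrite -hbs.
have ftder y : `|y - t0| < dt -> derivable ft y 1.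
  move=> hy; have [hy1 hy2] := nb hy mt1' mt2.
  have [a1 _ _ _ _] := uder y bs hy1.
  have [b1 _ _ _ _] := vder y bs hy1.
  by have [] := derB3 a1 b1 (dpsi y (ltW hy1)).
pose F := fun s => pd1 u s bs - pd1 v s bs - (eps * m s - (2 * eta) * (phi s * m s)).
have nearF : \forall s \near t0, derive1 ft s = F s.
  near=> s.
  have s0 : 0 < s by near: s; exact: lt_nbhsr.
  have [a1 _ _ _ _] := uder s bs s0.
  have [b1 _ _ _ _] := vder s bs s0.
  have [_ ->] := derB3 a1 b1 (dpsi s (ltW s0)).
  by rewrite psi' //.
have [dm0 [_ _]] := kmder t0 t0pos.
have [_ [dmm kmrel]] := kmder t0 t0pos.
have dG : derivable (fun s => eps * m s - (2 * eta) * (phi s * m s)) t0 1 /\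
   derive1 (fun s => eps * m s - (2 * eta) * (phi s * m s)) t0 =
   eps * derive1 m t0 - (2 * eta) * (m t0 * m t0 + phi t0 * derive1 m t0).
  have [d1 e1] := derMl eps dmm.
  have [d2 e2] := derM (phider t0 t0ge) dmm.
  have [d3 e3] := derMl (2 * eta) d2.
  have [d4 e4] := derB2 d1 d3.
  by split => //; rewrite e4 e1 e3 e2 phi'm.
have [dF eF] := derB3 du11 dv11 dG.1.
rewrite dG.2 in eF.
have dft' : derivable (derive1 ft) t0 1.
  by apply: near_eq_derivable dF; near=> s; rewrite (near nearF s).
have [ft'0 ft''] := max2 dt0 ftmax ftder dft'.
have F0 : F t0 = 0 by rewrite -ft'0; apply/esym; exact: (nbhs_singleton nearF).
have e2 : derive1 (derive1 ft) t0 = derive1 F t0.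
  by rewrite !derive1E; apply: near_eq_derive; near=> s; rewrite (near nearF s).
rewrite e2 eF in ft''.
have Eu := uE t0 bs t0pos.
have Ev := vE t0 bs t0pos.
rewrite /Eop in Eu Ev.
have [k0 m0] := kmpos t0 t0pos.
rewrite /F in F0.
exact: (alg k0 m0 eta0 Eu Ev F0 ft'' fth'' kmrel).
Unshelve. all: by end_near.
Qed.
End M2.

Section M3.
Variable R : realType.

Definition Vf (S c : R -> R) t := Num.sqrt (S t * c t ^+ 2).
Definition kf (S c : R -> R) t := c t ^+ 2 / Vf S c t.
Definition mf (S c : R -> R) t := S t / Vf S c t.

Lemma sqr_pos (x : R) : x != 0 -> 0 < x ^+ 2.
Proof. by move=> x0; rewrite lt_def sqrf_eq0 x0 sqr_ge0. Qed.

Lemma Vf_pos (S c : R -> R) (t : R) : 0 < S t -> c t != 0 -> 0 < Vf S c t.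
Proof. by move=> S0 c0; rewrite /Vf sqrtr_gt0 mulr_gt0 // sqr_pos. Qed.

Lemma km1 (S c : R -> R) (t : R) : 0 < S t -> c t != 0 -> kf S c t * mf S c t = 1.
Proof.
move=> S0 c0; have V0 := Vf_pos S0 c0.
rewrite /kf /mf mulrACA -invfM -expr2 /Vf sqr_sqrtr; last first.
  by apply: mulr_ge0; [exact: ltW | exact: sqr_ge0].
rewrite [c t ^+ 2 * S t]mulrC mulfV //. by rewrite mulf_neq0 // ?lt0r_neq0 // sqr_pos.
Qed.

Lemma kmder (S c : R -> R) (t : R) : derivable S t 1 -> derivable c t 1 -> 0 < S t -> c t != 0 ->
  derivable (kf S c) t 1 /\ derivable (mf S c) t 1.
Proof.
move=> dS dc S0 c0.
have [dc2 _] := derM dc dc.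
have [dSc _] := derM dS dc2.
have dV : derivable (Vf S c) t 1.
  have e : Vf S c = fun y => Num.sqrt (S y * (c y * c y)).
    by apply/funext => y; rewrite /Vf expr2.
  rewrite e; apply: der_sqrt => //.
  by rewrite -expr2 mulr_gt0 // sqr_pos.
have V0 : Vf S c t != 0 by apply: lt0r_neq0; exact: Vf_pos.
split.
- have e : kf S c = fun y => (c y * c y) / Vf S c y.
    by apply/funext => y; rewrite /kf expr2.
  by rewrite e; apply: der_div.
- by apply: der_div.
Qed.

Lemma kmrel (S c : R -> R) (t : R) : 0 < t ->
  (forall s, 0 < s -> derivable S s 1 /\ derivable c s 1) ->
  (forall s, 0 < s -> 0 < S s /\ c s != 0) ->
  derive1 (kf S c) t * mf S c t + kf S c t * derive1 (mf S c) t = 0.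
Proof.
move=> t0 der pos.
have [dS dc] := der t t0. have [S0 c0] := pos t t0.
have [dk dm] := kmder dS dc S0 c0.
have [_ e] := derM dk dm.
rewrite -e.
rewrite (derive1E (fun y => kf S c y * mf S c y) t).
rewrite (@near_eq_derive R R^o R^o (fun y => kf S c y * mf S c y) (fun _ => 1) t 1); last first.
  near=> s.
  have s0 : 0 < s by near: s; exact: lt_nbhsr.
  by have [S1 c1] := pos s s0; rewrite km1.
exact: derive_cst.
Unshelve. all: by end_near.
Qed.


Definition Eop' (k m : R -> R) (u : R -> R -> R) (t th : R) : R :=
  derive1 k t * pd1 u t th + k t * pd1 (pd1 u) t th + m t * pd2 (pd2 u) t th.

Lemma lap_eq N (X : R -> R -> 'I_N -> R) (S c : R -> R) (u : R -> R -> R) (t th : R) :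
  0 < t ->
  (forall s b, 0 < s -> [/\ g11 X s b = S s, g12 X s b = 0 & g22 X s b = c s ^+ 2]) ->
  (forall s, 0 < s -> derivable S s 1 /\ derivable c s 1) ->
  (forall s, 0 < s -> 0 < S s /\ c s != 0) ->
  derivable (fun s => pd1 u s th) t 1 ->
  derivable (fun b => pd2 u t b) th 1 ->
  laplace_beltrami X u t th = Eop' (kf S c) (mf S c) u t th / Vf S c t.
Proof.
move=> t0 met der pos du11 du22.
have volE s b : 0 < s -> volg X s b = Vf S c s.
  by move=> s0; have [h1 h2 h3] := met s b s0; rewrite /volg h1 h2 h3 expr0n /= subr0.
have A : pd1 (fun a b => (g22 X a b * pd1 u a b - g12 X a b * pd2 u a b) / volg X a b) t th
    = derive1 (fun s => kf S c s * pd1 u s th) t.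
  rewrite /pd1.
  rewrite (derive1E (fun s => (g22 X s th * derive1 (fun s0 => u s0 th) s
     - g12 X s th * derive1 (fun s0 => u s s0) th) / volg X s th)).
  rewrite (derive1E (fun s => kf S c s * derive1 (fun s0 => u s0 th) s)).
  apply: near_eq_derive; near=> s.
  have s0 : 0 < s by near: s; exact: lt_nbhsr.
  have [h1 h2 h3] := met s th s0.
  by rewrite h2 h3 volE // mul0r subr0 /kf mulrAC.
have B : pd2 (fun a b => (g11 X a b * pd2 u a b - g12 X a b * pd1 u a b) / volg X a b) t th
    = derive1 (fun b => mf S c t * pd2 u t b) th.
  rewrite /pd2; congr (derive1 _ th); apply/funext => b.
  have [h1 h2 h3] := met t b t0.
  by rewrite h1 h2 volE // mul0r subr0 /mf mulrAC.
have [S0 c0] := pos t t0. have [dS dc] := der t t0.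
have [dk dm] := kmder dS dc S0 c0.
rewrite /laplace_beltrami A B (derM dk du11).2 (derMl (mf S c t) du22).2 volE //.
Unshelve. all: by end_near.
Qed.

End M3.

Section M4.
Variable R : realType.

Lemma der_exp (g : R -> R) x : derivable g x 1 ->
  derivable (fun y => expR (g y)) x 1 /\
  derive1 (fun y => expR (g y)) x = expR (g x) * derive1 g x.
Proof.
move=> dg; split.
  have : derivable (expR \o g) x 1.
    apply/derivable1_diffP; apply: differentiable_comp; first exact/derivable1_diffP.
    exact/derivable1_diffP/derivable_expR.
  by [].
have := derive1_comp dg (@derivable_expR R (g x)).
rewrite /= => ->; congr (_ * _).
rewrite (derive1E (@expR R) (g x)); exact: derive_val.
Qed.

Lemma mf_eq (S c : R -> R) x : 0 < S x -> c x != 0 ->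
  mf S c x = Num.sqrt (S x) / `|c x|.
Proof.
move=> S0 c0; rewrite /mf /Vf sqrtrM ?sqrtr_sqr; last exact: ltW.
have s0 : 0 < Num.sqrt (S x) by rewrite sqrtr_gt0.
have cpos : 0 < `|c x| by rewrite normr_gt0.
rewrite -{1}(sqr_sqrtr (ltW S0)) expr2 invfM mulrA mulfK //.
exact: lt0r_neq0.
Qed.


Lemma cc'_le (S c : R -> R) x : 0 < S x -> c x != 0 -> (derive1 c x)^+2 <= S x ->
  c x * derive1 c x <= c x ^+ 2 * mf S c x.
Proof.
move=> S0 c0 h; rewrite mf_eq //.
have cpos : 0 < `|c x| by rewrite normr_gt0.
have -> : c x ^+ 2 * (Num.sqrt (S x) / `|c x|) = `|c x| * Num.sqrt (S x).
  rewrite -real_normK ?num_real //; field; exact: lt0r_neq0.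
apply: le_trans (ler_norm _) _; rewrite normrM ler_pM2l //.
by rewrite -sqrtr_sqr; apply: ler_wsqrtr.
Qed.

Lemma K_le (S c phi : R -> R) :
  (forall s, derivable c s 1) ->
  (forall s, 0 <= s -> 0 < S s /\ c s != 0) ->
  (forall s, 0 <= s -> (derive1 c s)^+2 <= S s) ->
  (forall s, 0 <= s -> derivable phi s 1 /\ derive1 phi s = mf S c s) ->
  phi 0 = 0 ->
  forall x, 0 <= x -> c x ^+ 2 <= c 0 ^+ 2 * expR (2 * phi x).
Proof.
move=> dc pos dc2 dphi phi0 x x0.
pose K := fun y => c y * c y * expR ((-2) * phi y).
have dK y : 0 <= y -> derivable K y 1 /\ derive1 K y <= 0.
  move=> y0; have [dp ep] := dphi y y0.
  have [d1 e1] := derMl (-2) dp.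
  have [d2 e2] := der_exp d1.
  have [d3 e3] := derM (dc y) (dc y).
  have [d4 e4] := derM d3 d2.
  split => //; rewrite e4 e3 e2 e1 ep.
  have [S0 c0] := pos y y0.
  have h := cc'_le S0 c0 (dc2 y y0); rewrite expr2 in h.
  have e0 := expR_gt0 ((-2) * phi y).
  set E := expR _ in e0 *; set D := derive1 c y in h *; set M := mf S c y in h *.
  have -> : (D * c y + c y * D) * E + c y * c y * (E * (-2 * M)) =
    (2 * E) * (c y * D - c y * c y * M) by ring.
  by apply: mulr_ge0_le0; [lra | lra].
have Kle : K x <= K 0.
  apply: (@ler0_derive1_nincry R K 0) => //.
  - by move=> y; rewrite in_itv /= => /andP[/ltW y0 _]; exact: (dK y y0).1.
  - by move=> y; rewrite in_itv /= => /andP[/ltW y0 _]; exact: (dK y y0).2.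
  - apply: derivable_within_continuous => y; rewrite in_itv /= => /andP[y0 _].
    exact: (dK y y0).1.
move: Kle; rewrite /K phi0 mulr0 expR0 mulr1 -expr2.
have e0 := expR_gt0 (2 * phi x).
have -> : c x * c x * expR (-2 * phi x) = c x ^+ 2 / expR (2 * phi x).
  by rewrite -expr2 mulNr expRN.
by rewrite ler_pdivrMr.
Qed.


Lemma phi_unb (S c phi : R -> R) :
  (forall s, derivable S s 1) -> (forall s, derivable c s 1) ->
  (forall s, 0 <= s -> 0 < S s /\ c s != 0) ->
  (forall s, 0 <= s -> (derive1 c s)^+2 <= S s) ->
  (\int[@lebesgue_measure R]_(t in `[0%R, +oo[%classic) (Num.sqrt (S t))%:E = +oo)%E ->
  (forall s, 0 <= s -> derivable phi s 1 /\ derive1 phi s = mf S c s) ->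
  phi 0 = 0 ->
  (forall t s, 0 <= t -> t <= s -> phi t <= phi s) ->
  forall B, exists T, 0 <= T /\ B <= phi T.
Proof.
move=> dS dc pos dc2 infl dphi phi0 phimono B.
case: (pselect (exists T, 0 <= T /\ B <= phi T)) => // H; exfalso.
have Hb T : 0 <= T -> phi T < B.
  by move=> T0; rewrite ltNge; apply/negP => hB; apply: H; exists T.
pose a := `|c 0|.
have a0 : 0 < a by rewrite normr_gt0; have [] := pos 0 (lexx _).
pose E := fun x => a * expR (phi x).
pose E' := fun x => a * (expR (phi x) * mf S c x).
have dE x : 0 <= x -> derivable E x 1 /\ derive1 E x = E' x.
  move=> x0; have [dp ep] := dphi x x0.
  have [d1 e1] := der_exp dp.
  have [d2 e2] := derMl a d1.
  by split => //; rewrite e2 e1 ep.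
have mfpos x : 0 <= x -> 0 < mf S c x.
  by move=> x0; have [S0 c0] := pos x x0; rewrite mf_eq // divr_gt0 ?sqrtr_gt0 ?normr_gt0.
have dmf x : 0 <= x -> derivable (mf S c) x 1.
  by move=> x0; have [S0 c0] := pos x x0; have [] := kmder (dS x) (dc x) S0 c0.
have dE' x : 0 <= x -> derivable E' x 1.
  move=> x0; have [dp ep] := dphi x x0.
  have [d1 e1] := der_exp dp.
  have [d2 e2] := derM d1 (dmf x x0).
  by have [] := derMl a d2.
have E'pos x : 0 <= x -> 0 <= E' x.
  move=> x0; apply: mulr_ge0; first exact: ltW.
  by apply: mulr_ge0; [exact: expR_ge0 | exact: ltW (mfpos x x0)].
have Emono x y : 0 <= x -> x <= y -> E x <= E y.
  by move=> x0 xy; rewrite /E ler_pM2l // ler_expR; apply: phimono.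
have Ebd x : 0 <= x -> E x <= a * expR B.
  by move=> x0; rewrite /E ler_pM2l // ler_expR; apply: ltW; apply: Hb.
have sqle x : 0 <= x -> Num.sqrt (S x) <= E' x.
  move=> x0; have [S0 c0] := pos x x0.
  have hK := K_le dc pos dc2 dphi phi0 x0.
  have cle : `|c x| <= a * expR (phi x).
    have : `|c x| ^+ 2 <= (a * expR (phi x)) ^+ 2.
      rewrite real_normK ?num_real // exprMn /a real_normK ?num_real //.
      by rewrite -expRM_natl.
    rewrite ler_pXn2r // ?nnegrE //.
    by apply: mulr_ge0; [exact: ltW | exact: expR_ge0].
  have -> : Num.sqrt (S x) = mf S c x * `|c x|.
    by rewrite mf_eq // mulrAC mulfK // normr_eq0.
  by rewrite /E' mulrA [X in _ <= X]mulrC ler_pM2l ?mfpos.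
pose G := fun x => E (Num.max x 0).
have Gnd : nondecreasing_fun G.
  move=> x y xy; rewrite /G; apply: Emono; first by rewrite le_max lexx orbT.
  by rewrite ge_max !le_max xy lexx !orbT.
have Gub : has_ubound (range G).
  by exists (a * expR B); move=> _ [x _ <-]; apply: Ebd; rewrite le_max lexx orbT.
have Gcvg := nondecreasing_cvgr Gnd Gub.
set l := sup (range G) in Gcvg.
have Ecvg : E x @[x --> +oo] --> l.
  apply: cvg_trans Gcvg; apply: near_eq_cvg; near=> x.
  rewrite /G max_l //; near: x; apply: nbhs_pinfty_ge; exact: num_real.
have hint : (\int[@lebesgue_measure R]_(x in `[0%R, +oo[%classic) (E' x)%:E
    = l%:E - (E 0)%:E)%E.
  apply: (ge0_continuous_FTC2y (F := E)).
  - by move=> x x0; exact: E'pos.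
  - apply: derivable_within_continuous => x; rewrite in_itv /= andbT => x0; exact: dE'.
  - exact: Ecvg.
  - by move=> x x0; exact: (dE x (ltW x0)).1.
  - apply: cvg_at_right_filter.
    have := (dE 0 (lexx _)).1; move/derivable1_diffP/differentiable_continuous; exact.
  - by move=> x; rewrite in_itv /= andbT => x0; exact: (dE x (ltW x0)).2.
have hle : (\int[@lebesgue_measure R]_(x in `[0%R, +oo[%classic) (Num.sqrt (S x))%:E
   <= \int[@lebesgue_measure R]_(x in `[0%R, +oo[%classic) (E' x)%:E)%E.
  apply: ge0_le_integral => //.
  all: try exact: measurable_itv.
  - apply/measurable_realfun.measurable_EFinP; apply: measurable_realfun.subspace_continuous_measurable_fun; first exact: measurable_itv.
    apply: continuous_subspaceT => x; apply: continuous_comp; last exact: sqrt_continuous.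
    exact/differentiable_continuous/derivable1_diffP.
  - apply/measurable_realfun.measurable_EFinP; apply: measurable_realfun.subspace_continuous_measurable_fun; first exact: measurable_itv.
    apply: derivable_within_continuous => x; rewrite in_itv /= andbT => x0; exact: dE'.
  - by move=> x; rewrite /= in_itv /= andbT => x0; rewrite lee_fin; exact: sqle.
move: hle; rewrite infl hint -EFinB leye_eq.
by [].
Unshelve. all: by end_near.
Qed.


Lemma phi_exists (S c : R -> R) :
  (forall s, derivable S s 1) -> (forall s, derivable c s 1) ->
  (forall s, 0 <= s -> 0 < S s /\ c s != 0) ->
  exists phi : R -> R,
    [/\ (forall s, 0 <= s -> derivable phi s 1 /\ derive1 phi s = mf S c s),
        phi 0 = 0 & (forall t s, 0 <= t -> t <= s -> phi t <= phi s)].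
Proof.
move=> dS dc pos.
have [S00 c00] := pos 0 (lexx _).
have [a0 [a0neg pos']] : exists a0, a0 < 0 /\ forall s, a0 <= s -> 0 < S s /\ c s != 0.
  have cS : S x @[x --> 0] --> S 0.
    exact/differentiable_continuous/derivable1_diffP.
  have cc : {for 0, continuous (fun x => c 0 * c x)}.
    have [d _] := derMl (c 0) (dc 0).
    exact/differentiable_continuous/derivable1_diffP.
  have h1 := @cvgr_gt _ _ _ _ _ _ cS 0 S00.
  have cc0 : 0 < c 0 * c 0 by rewrite -expr2 sqr_pos.
  have h2 := @cvgr_gt _ _ _ _ _ _ cc 0 cc0.
  have : \forall x \near (0:R), 0 < S x /\ 0 < c 0 * c x.
    by near=> x; split; near: x; [exact: h1 | exact: h2].
  case=> e /= e0 He.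
  exists (- (e / 2)); split; first by rewrite oppr_lt0 divr_gt0.
  move=> s hs; case: (leP 0 s) => s0; first exact: pos.
  have : ball 0 e s.
    by rewrite /ball /= sub0r normrN ltr0_norm //; lra.
  move/He => [/= h3 h4]; split => //.
  by apply/eqP => cs0; move: h4; rewrite cs0 mulr0 ltxx.
pose mm := mf S c.
have dmm s : a0 <= s -> derivable mm s 1.
  by move=> s0; have [S0 c0] := pos' s s0; have [] := kmder (dS s) (dc s) S0 c0.
have cmm s : a0 <= s -> {for s, continuous mm}.
  by move=> s0; apply/differentiable_continuous/derivable1_diffP; exact: dmm.
pose F := fun x => (\int[@lebesgue_measure R]_(t in [set` `[a0, x]]) (mm t))%R.
have dF x : a0 < x -> derivable F x 1 /\ derive1 F x = mm x.
  move=> ax.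
  have xu : x < x + 1 by rewrite ltrDl.
  have := @continuous_FTC1_closed R mm a0 x (x + 1) xu.
  apply.
  - apply: continuous_compact_integrable; first exact: segment_compact.
    apply: continuous_in_subspaceT => y; rewrite inE /= in_itv /= => /andP[y0 _].
    exact: cmm.
  - exact: ax.
  - by apply: cmm; apply: ltW.
exists (fun x => F x - F 0); split.
- move=> s s0.
  have as0 : a0 < s by apply: lt_le_trans a0neg s0.
  have [d1 e1] := dF s as0.
  have [d2 e2] := derB2 d1 (derivable_cst1 (a := F 0) (x := s)).
  by split => //; rewrite e2 e1 derive1_cst1 subr0.
- by rewrite subrr.
- move=> t s t0 ts.
  apply: (@ger0_derive1_ndecr R (fun x => F x - F 0) t s) => //.
  + move=> x; rewrite in_itv /= => /andP[tx _].
    have as0 : a0 < x by apply: lt_trans a0neg (le_lt_trans t0 tx).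
    have [d1 _] := dF x as0.
    by have [] := derB2 d1 (derivable_cst1 (a := F 0) (x := x)).
  + move=> x; rewrite in_itv /= => /andP[tx _].
    have x0 : 0 < x by apply: le_lt_trans t0 tx.
    have as0 : a0 < x by apply: lt_trans a0neg x0.
    have [d1 e1] := dF x as0.
    have [d2 ->] := derB2 d1 (derivable_cst1 (a := F 0) (x := x)).
    rewrite e1 derive1_cst1 subr0 /mm.
    have [S0 c0] := pos x (ltW x0).
    by rewrite mf_eq // divr_ge0 // ?sqrtr_ge0.
  + apply: derivable_within_continuous => x; rewrite in_itv /= => /andP[tx _].
    have as0 : a0 < x by apply: lt_le_trans a0neg (le_trans t0 tx).
    have [d1 _] := dF x as0.
    by have [] := derB2 d1 (derivable_cst1 (a := F 0) (x := x)).
Unshelve. all: by end_near.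
Qed.

End M4.

Section M5.
Variable R : realType.

Lemma parabolic_of N (X : R -> R -> 'I_N -> R) (S c : R -> R) :
  (forall s b, 0 < s -> [/\ g11 X s b = S s, g12 X s b = 0 & g22 X s b = c s ^+ 2]) ->
  (forall s, derivable S s 1) -> (forall s, derivable c s 1) ->
  (forall s, 0 <= s -> 0 < S s /\ c s != 0) ->
  (forall s, 0 <= s -> (derive1 c s)^+2 <= S s) ->
  (\int[@lebesgue_measure R]_(t in `[0%R, +oo[%classic) (Num.sqrt (S t))%:E = +oo)%E ->
  parabolic_end X.
Proof.
move=> met dS dc pos dc2 infl.
have [phi [dphi phi0 phimono]] := phi_exists dS dc pos.
have unb := phi_unb dS dc pos dc2 infl dphi phi0 phimono.
have goodh u : bounded_on_end u -> harmonic_on_end X u -> good (kf S c) (mf S c) u.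
  move=> bu [per cont C2 lap]; split => // t th t0.
  have [uder _ _ _ _] := C2. have [_ _ du11 _ [_ du22]] := uder t th t0.
  have := lap t th t0.
  rewrite (lap_eq t0 met (fun s _ => conj (dS s) (dc s)) (fun s s0 => pos s (ltW s0)) du11 du22).
  have [S0 c0] := pos t (ltW t0). have V0 := Vf_pos S0 c0.
  move/eqP; rewrite mulf_eq0 invr_eq0 (negbTE (lt0r_neq0 V0)) orbF => /eqP.
  by [].
have kmpos t : 0 < t -> 0 < kf S c t /\ 0 < mf S c t.
  move=> t0; have [S0 c0] := pos t (ltW t0); have V0 := Vf_pos S0 c0.
  by split; apply: divr_gt0 => //; apply: sqr_pos.
have kmd t : 0 < t -> derivable (kf S c) t 1 /\ derivable (mf S c) t 1 /\
    derive1 (kf S c) t * mf S c t + kf S c t * derive1 (mf S c) t = 0.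
  move=> t0; have [S0 c0] := pos t (ltW t0).
  have [dk dm] := kmder (dS t) (dc t) S0 c0.
  split => //; split => //.
  apply: kmrel t0 (fun s _ => conj (dS s) (dc s)) (fun s s0 => pos s (ltW s0)).
have phider t : 0 <= t -> derivable phi t 1 by move=> t0; exact: (dphi t t0).1.
have phi'm t : 0 < t -> derive1 phi t = mf S c t by move=> t0; exact: (dphi t (ltW t0)).2.
move=> u v bu bv hu hv uv0 t th t0.
have gu := goodh u bu hu. have gv := goodh v bv hv.
apply/eqP; rewrite eq_le; apply/andP; split.
- exact: (core kmpos kmd phider phi'm phi0 phimono unb gu gv uv0).
- exact: (core kmpos kmd phider phi'm phi0 phimono unb gv gu (fun th => esym (uv0 th))).
Qed.

End M5.

Section M6.
Variable R : realType.

Lemma dotvC N (u v : 'I_N -> R) : dotv u v = dotv v u.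
Proof. by rewrite /dotv; apply: eq_bigr => i _; rewrite mulrC. Qed.

Lemma basis_expand n (f : 'I_n -> 'I_n -> R) :
  (forall i j, dotv (f i) (f j) = (i == j)%:R) ->
  forall (v : 'I_n -> R) k, v k = \sum_(i < n) dotv v (f i) * f i k.
Proof.
move=> ortho v k.
pose M : 'M[R]_n := \matrix_(i, j) f i j.
have MMt : M *m M^T = 1%:M.
  apply/matrixP => i j; rewrite !mxE -ortho /dotv.
  by apply: eq_bigr => l _; rewrite !mxE.
have MtM := mulmx1C MMt.
have e l : \sum_(i < n) f i l * f i k = (l == k)%:R.
  have := congr1 (fun A : 'M[R]_n => A l k) MtM; rewrite !mxE => <-.
  by apply: eq_bigr => i _; rewrite !mxE.
transitivity (\sum_(l < n) v l * (l == k)%:R).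
  rewrite (bigD1 k) //= eqxx mulr1 big1 ?addr0 // => l /negbTE ->.
  by rewrite mulr0.
symmetry; rewrite /dotv.
under eq_bigr do rewrite mulr_suml.
rewrite exchange_big /=; apply: eq_bigr => l _.
by rewrite -e mulr_sumr; apply: eq_bigr => i _; rewrite mulrA.
Qed.

Lemma parseval n (f : 'I_n -> 'I_n -> R) :
  (forall i j, dotv (f i) (f j) = (i == j)%:R) ->
  forall (v : 'I_n -> R), dotv v v = \sum_(i < n) dotv v (f i) ^+ 2.
Proof.
move=> ortho v.
rewrite {1}/dotv.
under eq_bigr => k _ do rewrite {2}(basis_expand ortho v k) mulr_sumr.
rewrite exchange_big /=; apply: eq_bigr => i _.
rewrite expr2 /dotv mulr_suml; apply: eq_bigr => k _.
by rewrite [_ * f i k]mulrC mulrA.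
Qed.


Lemma dotv_der N (w : R -> 'I_N -> R) (a : 'I_N -> R) t :
  (forall k, derivable (fun s => w s k) t 1) ->
  derivable (fun s => dotv (w s) a) t 1 /\
  derive1 (fun s => dotv (w s) a) t = dotv (fun k => derive1 (fun s => w s k) t) a.
Proof.
move=> dw.
have e : (fun s => dotv (w s) a) = \sum_(k < N) (fun s => w s k * a k).
  by rewrite fct_sumE.
have hk k : is_derive t 1 (fun s => w s k * a k) (derive1 (fun s => w s k) t * a k).
  have [d1 e1] := derM (dw k) (derivable_cst1 (a := a k) (x := t)).
  apply: DeriveDef => //.
  rewrite -(derive1E (fun s => w s k * a k) t) e1 derive1_cst1 mulr0 addr0 //.
have H := is_derive_sum hk.
rewrite e; split; first exact: (@ex_derive _ _ _ _ _ _ _ H).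
rewrite (derive1E (\sum_(k < N) (fun s => w s k * a k)) t).
exact: (@derive_val _ _ _ _ _ _ _ H).
Qed.

Lemma dotv_self_der N (w : R -> 'I_N -> R) t :
  (forall k, derivable (fun s => w s k) t 1) ->
  derivable (fun s => dotv (w s) (w s)) t 1.
Proof.
move=> dw.
have e : (fun s => dotv (w s) (w s)) = \sum_(k < N) (fun s => w s k * w s k).
  by rewrite fct_sumE.
rewrite e; apply: derivable_sum => k.
by have [] := derM (dw k) (dw k).
Qed.

Lemma sumsq_pos N (v : 'I_N -> R) : v <> (fun _ => 0) -> 0 < dotv v v.
Proof.
move=> vn0; rewrite lt_def; apply/andP; split; last first.
  by rewrite /dotv; apply: sumr_ge0 => i _; rewrite -expr2 sqr_ge0.
apply/eqP => /eqP; rewrite /dotv psumr_eq0 => [/allP H|i _]; last by rewrite -expr2 sqr_ge0.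
apply: vn0; apply/funext => i.
have := H i (mem_index_enum i); rewrite -expr2 sqrf_eq0 => /eqP ->.
by [].
Qed.

Lemma smooth_der N (beta : R -> 'I_N -> R) : smooth_curve beta ->
  forall k t, derivable (fun s => beta s k) t 1 /\
              derivable (fun s => velocity beta s k) t 1.
Proof.
move=> sm k t; split; first exact: (sm k 0 t).
exact: (sm k 1 t).
Qed.

End M6.

Section M7.
Variable R : realType.

Lemma der_lin3 (f1 f2 f3 : R -> R) (a0 a1 a2 a3 : R) x :
  derivable f1 x 1 -> derivable f2 x 1 -> derivable f3 x 1 ->
  derive1 (fun s => a0 + f1 s * a1 + f2 s * a2 + f3 s * a3) x =
  derive1 f1 x * a1 + derive1 f2 x * a2 + derive1 f3 x * a3.
Proof.
move=> d1 d2 d3.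
have dc := derivable_cst1 (a := a0) (x := x).
have [m1 em1] := derM d1 (derivable_cst1 (a := a1) (x := x)).
have [m2 em2] := derM d2 (derivable_cst1 (a := a2) (x := x)).
have [m3 em3] := derM d3 (derivable_cst1 (a := a3) (x := x)).
have [s1 es1] := derD2 dc m1.
have [s2 es2] := derD2 s1 m2.
have [s3 es3] := derD2 s2 m3.
rewrite es3 es2 es1 em1 em2 em3 !derive1_cst1.
by rewrite !mulr0 !addr0 add0r.
Qed.

Lemma der_trig (a0 A B x : R) :
  derive1 (fun b => a0 + cos b * A + sin b * B) x = - sin x * A + cos x * B.
Proof.
have dcos : derivable (@cos R) x 1 := @derivable_cos R x.
have dsin : derivable (@sin R) x 1 := @derivable_sin R x.
have ecos : derive1 (@cos R) x = - sin x.
  rewrite (derive1E (@cos R) x); exact: derive_val.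
have esin : derive1 (@sin R) x = cos x.
  rewrite (derive1E (@sin R) x); exact: derive_val.
have := der_lin3 a0 A B 0 dcos dsin (derivable_cst1 (a := 0) (x := x)).
have -> : (fun s => a0 + cos s * A + sin s * B + 0 * 0) = (fun b => a0 + cos b * A + sin b * B).
  by apply/funext => b; rewrite mulr0 addr0.
by move=> ->; rewrite ecos esin mulr0 addr0.
Qed.

Definition f3 (e1 e2 e3 : 'I_3 -> R) : 'I_3 -> 'I_3 -> R :=
  fun i => match nat_of_ord i with 0 => e1 | 1 => e2 | _ => e3 end.

Lemma f3_ortho e1 e2 e3 : orthonormal3 e1 e2 e3 ->
  forall i j, dotv (f3 e1 e2 e3 i) (f3 e1 e2 e3 j) = (i == j)%:R.
Proof.
move=> [h11 h22 h33 [h12 h13 h23]].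
by case=> [[|[|[|i]]] Hi] //; case=> [[|[|[|j]]] Hj] //=;
  rewrite ?h11 ?h22 ?h33 ?h12 ?h13 ?h23 // dotvC ?h12 ?h13 ?h23.
Qed.

Lemma sum3 (g : 'I_3 -> R) : \sum_(i < 3) g i =
  g (Ordinal (isT : 0 < 3)%N) + g (Ordinal (isT : 1 < 3)%N) + g (Ordinal (isT : 2 < 3)%N).
Proof. by rewrite !big_ord_recr big_ord0 /= add0r; congr (g _ + g _ + g _); apply: val_inj. Qed.

Lemma dot3 (e1 e2 e3 : 'I_3 -> R) a b c a' b' c' : orthonormal3 e1 e2 e3 ->
  dotv (fun k => a * e1 k + b * e2 k + c * e3 k) (fun k => a' * e1 k + b' * e2 k + c' * e3 k)
  = a * a' + b * b' + c * c'.
Proof.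
move=> [h11 h22 h33 [h12 h13 h23]].
have key : dotv (fun k => a * e1 k + b * e2 k + c * e3 k)
                (fun k => a' * e1 k + b' * e2 k + c' * e3 k) =
  a * a' * dotv e1 e1 + b * b' * dotv e2 e2 + c * c' * dotv e3 e3
  + (a * b' + b * a') * dotv e1 e2 + (a * c' + c * a') * dotv e1 e3
  + (b * c' + c * b') * dotv e2 e3.
  by rewrite /dotv !sum3; ring.
by rewrite key h11 h22 h33 h12 h13 h23; ring.
Qed.

End M7.

Section M9.
Variable R : realType.

Lemma angle (x y : R) : x ^+ 2 + y ^+ 2 = 1 -> exists s, cos s = x /\ sin s = y.
Proof.
move=> h.
have hx : `|x| <= 1.
  have : `|x| ^+ 2 <= 1 ^+ 2.
    by rewrite real_normK ?num_real // expr1n -h lerDl sqr_ge0.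
  by rewrite ler_pXn2r // nnegrE.
have hx' : -1 <= x <= 1 by rewrite -ler_norml.
have ca : cos (acos x) = x by rewrite acosK // in_itv /=.
have sa : sin (acos x) = `|y|.
  rewrite sin_acos // -sqrtr_sqr; congr Num.sqrt.
  by rewrite -h addrAC subrr add0r.
case: (leP 0 y) => y0.
  by exists (acos x); rewrite ca sa ger0_norm.
exists (- acos x); rewrite cosN sinN ca sa ltr0_norm //.
by rewrite opprK.
Qed.

Lemma der_lin4 (f1 f2 f3 f4 : R -> R) (a0 a1 a2 a3 a4 : R) x :
  derivable f1 x 1 -> derivable f2 x 1 -> derivable f3 x 1 -> derivable f4 x 1 ->
  derive1 (fun s => a0 + f1 s * a1 + f2 s * a2 + f3 s * a3 + f4 s * a4) x =
  derive1 f1 x * a1 + derive1 f2 x * a2 + derive1 f3 x * a3 + derive1 f4 x * a4.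
Proof.
move=> d1 d2 d3 d4.
have dc := derivable_cst1 (a := a0) (x := x).
have [m1 em1] := derM d1 (derivable_cst1 (a := a1) (x := x)).
have [m2 em2] := derM d2 (derivable_cst1 (a := a2) (x := x)).
have [m3 em3] := derM d3 (derivable_cst1 (a := a3) (x := x)).
have [m4 em4] := derM d4 (derivable_cst1 (a := a4) (x := x)).
have [s1 es1] := derD2 dc m1.
have [s2 es2] := derD2 s1 m2.
have [s3 es3] := derD2 s2 m3.
have [s4 es4] := derD2 s3 m4.
rewrite es4 es3 es2 es1 em1 em2 em3 em4 !derive1_cst1.
by rewrite !mulr0 !addr0 add0r.
Qed.

Definition f4 (e1 e2 e3 e4 : 'I_4 -> R) : 'I_4 -> 'I_4 -> R :=
  fun i => match nat_of_ord i with 0 => e1 | 1 => e2 | 2 => e3 | _ => e4 end.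

Lemma f4_ortho e1 e2 e3 e4 : orthonormal4 e1 e2 e3 e4 ->
  forall i j, dotv (f4 e1 e2 e3 e4 i) (f4 e1 e2 e3 e4 j) = (i == j)%:R.
Proof.
move=> [h11 h22 h33 h44 [h12 h13 h14 h23 [h24 h34]]].
by case=> [[|[|[|[|i]]]] Hi] //; case=> [[|[|[|[|j]]]] Hj] //=;
  rewrite ?h11 ?h22 ?h33 ?h44 ?h12 ?h13 ?h14 ?h23 ?h24 ?h34 //
    dotvC ?h12 ?h13 ?h14 ?h23 ?h24 ?h34.
Qed.

Lemma sum4 (g : 'I_4 -> R) : \sum_(i < 4) g i =
  g (Ordinal (isT : 0 < 4)%N) + g (Ordinal (isT : 1 < 4)%N) + g (Ordinal (isT : 2 < 4)%N)
  + g (Ordinal (isT : 3 < 4)%N).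
Proof.
by rewrite !big_ord_recr big_ord0 /= add0r; congr (g _ + g _ + g _ + g _); apply: val_inj.
Qed.

Lemma dot4 (e1 e2 e3 e4 : 'I_4 -> R) a b c d a' b' c' d' : orthonormal4 e1 e2 e3 e4 ->
  dotv (fun k => a * e1 k + b * e2 k + c * e3 k + d * e4 k)
       (fun k => a' * e1 k + b' * e2 k + c' * e3 k + d' * e4 k)
  = a * a' + b * b' + c * c' + d * d'.
Proof.
move=> [h11 h22 h33 h44 [h12 h13 h14 h23 [h24 h34]]].
have key : dotv (fun k => a * e1 k + b * e2 k + c * e3 k + d * e4 k)
       (fun k => a' * e1 k + b' * e2 k + c' * e3 k + d' * e4 k) =
  a * a' * dotv e1 e1 + b * b' * dotv e2 e2 + c * c' * dotv e3 e3 + d * d' * dotv e4 e4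
  + (a * b' + b * a') * dotv e1 e2 + (a * c' + c * a') * dotv e1 e3
  + (a * d' + d * a') * dotv e1 e4 + (b * c' + c * b') * dotv e2 e3
  + (b * d' + d * b') * dotv e2 e4 + (c * d' + d * c') * dotv e3 e4.
  by rewrite /dotv !sum4; ring.
by rewrite key h11 h22 h33 h44 h12 h13 h14 h23 h24 h34; ring.
Qed.

End M9.

Section M8.
Variable R : realType.

Lemma euclid_case (p e1 e2 e3 : 'I_3 -> R) (beta : R -> 'I_3 -> R) :
  orthonormal3 e1 e2 e3 -> euclid_end_data p e1 e2 e3 beta ->
  parabolic_end (immersionE p e1 e2 e3 beta).
Proof.
move=> ON [sm reg infl inpl noint].
have ON' := f3_ortho ON.
pose w := fun s k => beta s k - p k.
have dw k t : derivable (fun s => w s k) t 1 /\ derive1 (fun s => w s k) t = velocity beta t k.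
  have [d1 _] := smooth_der sm k t.
  have [d e] := derB2 d1 (derivable_cst1 (a := p k) (x := t)).
  by split => //; rewrite e derive1_cst1 subr0.
pose C (e : 'I_3 -> R) s := dotv (w s) e.
have dC e t : derivable (C e) t 1 /\ derive1 (C e) t = dotv (velocity beta t) e.
  have [d ed] := dotv_der e (fun k => (dw k t).1).
  split => //; rewrite /C ed; congr dotv; apply/funext => k; exact: (dw k t).2.
pose X := immersionE p e1 e2 e3 beta.
have Xe s b k : X s b k = p k + C e1 s * (cos b * e1 k + sin b * e2 k)
    + C e2 s * (- sin b * e1 k + cos b * e2 k) + C e3 s * e3 k.
  by rewrite /X /immersionE /rotE /C /w /=; ring.
have C2z s : 0 <= s -> C e2 s = 0 by move=> s0; exact: inpl.
have D2z s : 0 < s -> derive1 (C e2) s = 0.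
  move=> s0; rewrite (derive1E (C e2) s).
  rewrite (@near_eq_derive R R^o R^o (C e2) (fun _ => 0) s 1); last first.
    near=> x; apply: C2z; apply: ltW; near: x; exact: lt_nbhsr.
  exact: derive_cst.
have pd1E s b k : pd1 (fun a b => X a b k) s b =
   derive1 (C e1) s * (cos b * e1 k + sin b * e2 k)
   + derive1 (C e2) s * (- sin b * e1 k + cos b * e2 k) + derive1 (C e3) s * e3 k.
  rewrite /pd1.
  have -> : (fun s0 => X s0 b k) = (fun s0 => p k + C e1 s0 * (cos b * e1 k + sin b * e2 k)
    + C e2 s0 * (- sin b * e1 k + cos b * e2 k) + C e3 s0 * e3 k).
    by apply/funext => s0; rewrite Xe.
  by apply: der_lin3; [exact: (dC e1 s).1 | exact: (dC e2 s).1 | exact: (dC e3 s).1].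
have pd2E s b k : pd2 (fun a b => X a b k) s b =
   - sin b * (C e1 s * e1 k + C e2 s * e2 k) + cos b * (C e1 s * e2 k - C e2 s * e1 k).
  rewrite /pd2.
  have -> : (fun b0 => X s b0 k) = (fun b0 => (p k + C e3 s * e3 k)
     + cos b0 * (C e1 s * e1 k + C e2 s * e2 k) + sin b0 * (C e1 s * e2 k - C e2 s * e1 k)).
    by apply/funext => b0; rewrite Xe; ring.
  exact: der_trig.
pose S t := dotv (velocity beta t) (velocity beta t).
have SE t : S t = derive1 (C e1) t ^+ 2 + derive1 (C e2) t ^+ 2 + derive1 (C e3) t ^+ 2.
  by rewrite /S (parseval ON') sum3 /= (dC e1 t).2 (dC e2 t).2 (dC e3 t).2.
have met s b : 0 < s -> [/\ g11 X s b = S s, g12 X s b = 0 & g22 X s b = C e1 s ^+ 2].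
  move=> s0.
  have P1 : (fun i => pd1 (fun a b => X a b i) s b) = (fun i =>
     (derive1 (C e1) s * cos b - derive1 (C e2) s * sin b) * e1 i
     + (derive1 (C e1) s * sin b + derive1 (C e2) s * cos b) * e2 i
     + derive1 (C e3) s * e3 i).
    by apply/funext => i; rewrite pd1E; ring.
  have P2 : (fun i => pd2 (fun a b => X a b i) s b) = (fun i =>
     (- sin b * C e1 s - cos b * C e2 s) * e1 i
     + (- sin b * C e2 s + cos b * C e1 s) * e2 i + 0 * e3 i).
    by apply/funext => i; rewrite pd2E; ring.
  have cs := cos2Dsin2 b.
  rewrite /g11 /g12 /g22 P1 P2 !dot3 // SE D2z // C2z ?(ltW s0) //.
  split.
  - transitivity (derive1 (C e1) s ^+ 2 * (cos b ^+ 2 + sin b ^+ 2) + derive1 (C e3) s ^+ 2).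
      by ring.
    by rewrite cs; ring.
  - by ring.
  - transitivity (C e1 s ^+ 2 * (cos b ^+ 2 + sin b ^+ 2)); first by ring.
    by rewrite cs mulr1.
apply: (parabolic_of (S := S) (c := C e1)).
- exact: met.
- move=> t; apply: dotv_self_der => k; exact: (smooth_der sm k t).2.
- by move=> t; exact: (dC e1 t).1.
- move=> t t0; split; first exact: sumsq_pos (reg t t0).
  apply/eqP => h.
  have h' : dotv (w t) e1 = 0 := h.
  have h2 : dotv (w t) e2 = 0 := C2z t t0.
  apply: (noint t t0 (dotv (w t) e3)); apply/funext => k.
  have := basis_expand ON' (w t) k; rewrite sum3 /= h' h2 !mul0r !add0r => e.
  by rewrite -e /w addrC subrK.
- move=> t t0; rewrite SE -addrA lerDl; apply: addr_ge0; exact: sqr_ge0.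
- exact: infl.
Unshelve. all: by end_near.
Qed.

End M8.

Section M10.
Variable R : realType.

Lemma sphere_case (e1 e2 e3 e4 : 'I_4 -> R) (beta : R -> 'I_4 -> R) :
  orthonormal4 e1 e2 e3 e4 -> sphere_end_data e1 e2 e3 e4 beta ->
  parabolic_end (immersionS e1 e2 e3 e4 beta).
Proof.
move=> ON [sm reg infl inpl noint].
have ON' := f4_ortho ON.
pose w := beta.
have dw k t : derivable (fun s => w s k) t 1 /\ derive1 (fun s => w s k) t = velocity beta t k.
  by have [d1 _] := smooth_der sm k t.
pose C (e : 'I_4 -> R) s := dotv (w s) e.
have dC e t : derivable (C e) t 1 /\ derive1 (C e) t = dotv (velocity beta t) e.
  have [d ed] := dotv_der e (fun k => (dw k t).1).
  split => //; rewrite /C ed; congr dotv; apply/funext => k; exact: (dw k t).2.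
pose X := immersionS e1 e2 e3 e4 beta.
have Xe s b k : X s b k = 0 + C e1 s * (cos b * e1 k + sin b * e2 k)
    + C e2 s * (- sin b * e1 k + cos b * e2 k) + C e3 s * e3 k + C e4 s * e4 k.
  by rewrite /X /immersionS /Defs.rotS /C /w /=; ring.
have C2z s : 0 <= s -> C e2 s = 0 by move=> s0; exact: (inpl s s0).2.
have D2z s : 0 < s -> derive1 (C e2) s = 0.
  move=> s0; rewrite (derive1E (C e2) s).
  rewrite (@near_eq_derive R R^o R^o (C e2) (fun _ => 0) s 1); last first.
    near=> x; apply: C2z; apply: ltW; near: x; exact: lt_nbhsr.
  exact: derive_cst.
have pd1E s b k : pd1 (fun a b => X a b k) s b =
   derive1 (C e1) s * (cos b * e1 k + sin b * e2 k)
   + derive1 (C e2) s * (- sin b * e1 k + cos b * e2 k) + derive1 (C e3) s * e3 k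
   + derive1 (C e4) s * e4 k.
  rewrite /pd1.
  have -> : (fun s0 => X s0 b k) = (fun s0 => 0 + C e1 s0 * (cos b * e1 k + sin b * e2 k)
    + C e2 s0 * (- sin b * e1 k + cos b * e2 k) + C e3 s0 * e3 k + C e4 s0 * e4 k).
    by apply/funext => s0; rewrite Xe.
  by apply: der_lin4; [exact: (dC e1 s).1 | exact: (dC e2 s).1 | exact: (dC e3 s).1
    | exact: (dC e4 s).1].
have pd2E s b k : pd2 (fun a b => X a b k) s b =
   - sin b * (C e1 s * e1 k + C e2 s * e2 k) + cos b * (C e1 s * e2 k - C e2 s * e1 k).
  rewrite /pd2.
  have -> : (fun b0 => X s b0 k) = (fun b0 => (C e3 s * e3 k + C e4 s * e4 k)
     + cos b0 * (C e1 s * e1 k + C e2 s * e2 k) + sin b0 * (C e1 s * e2 k - C e2 s * e1 k)).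
    by apply/funext => b0; rewrite Xe; ring.
  exact: der_trig.
pose S t := dotv (velocity beta t) (velocity beta t).
have SE t : S t = derive1 (C e1) t ^+ 2 + derive1 (C e2) t ^+ 2 + derive1 (C e3) t ^+ 2
    + derive1 (C e4) t ^+ 2.
  by rewrite /S (parseval ON') sum4 /= (dC e1 t).2 (dC e2 t).2 (dC e3 t).2 (dC e4 t).2.
have met s b : 0 < s -> [/\ g11 X s b = S s, g12 X s b = 0 & g22 X s b = C e1 s ^+ 2].
  move=> s0.
  have P1 : (fun i => pd1 (fun a b => X a b i) s b) = (fun i =>
     (derive1 (C e1) s * cos b - derive1 (C e2) s * sin b) * e1 i
     + (derive1 (C e1) s * sin b + derive1 (C e2) s * cos b) * e2 i
     + derive1 (C e3) s * e3 i + derive1 (C e4) s * e4 i).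
    by apply/funext => i; rewrite pd1E; ring.
  have P2 : (fun i => pd2 (fun a b => X a b i) s b) = (fun i =>
     (- sin b * C e1 s - cos b * C e2 s) * e1 i
     + (- sin b * C e2 s + cos b * C e1 s) * e2 i + 0 * e3 i + 0 * e4 i).
    by apply/funext => i; rewrite pd2E; ring.
  have cs := cos2Dsin2 b.
  rewrite /g11 /g12 /g22 P1 P2 !dot4 // SE D2z // C2z ?(ltW s0) //.
  split.
  - transitivity (derive1 (C e1) s ^+ 2 * (cos b ^+ 2 + sin b ^+ 2) + derive1 (C e3) s ^+ 2
       + derive1 (C e4) s ^+ 2).
      by ring.
    by rewrite cs; ring.
  - by ring.
  - transitivity (C e1 s ^+ 2 * (cos b ^+ 2 + sin b ^+ 2)); first by ring.
    by rewrite cs mulr1.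
apply: (parabolic_of (S := S) (c := C e1)).
- exact: met.
- move=> t; apply: dotv_self_der => k; exact: (smooth_der sm k t).2.
- by move=> t; exact: (dC e1 t).1.
- move=> t t0; split; first exact: sumsq_pos (reg t t0).
  apply/eqP => h.
  have h' : dotv (w t) e1 = 0 := h.
  have h2 : dotv (w t) e2 = 0 := C2z t t0.
  have one : dotv (w t) e3 ^+ 2 + dotv (w t) e4 ^+ 2 = 1.
    have := (inpl t t0).1; rewrite (parseval ON') sum4 /= h' h2.
    by rewrite expr0n /= add0r add0r.
  have [s [cs ss]] := angle one.
  apply: (noint t t0 s); apply/funext => k.
  have := basis_expand ON' (w t) k; rewrite sum4 /= h' h2 !mul0r !add0r => e.
  by rewrite /w in e; rewrite e cs ss.
- move=> t t0; rewrite SE -!addrA lerDl; apply: addr_ge0; first exact: sqr_ge0.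
  apply: addr_ge0; exact: sqr_ge0.
- exact: infl.
Unshelve. all: by end_near.
Qed.

End M10.

Unset Implicit Arguments.

Theorem theoremA (R : realType) :
  (forall (p e1 e2 e3 : 'I_3 -> R) (beta : R -> 'I_3 -> R),
      orthonormal3 e1 e2 e3 -> euclid_end_data p e1 e2 e3 beta ->
      parabolic_end (immersionE p e1 e2 e3 beta)) /\
  (forall (e1 e2 e3 e4 : 'I_4 -> R) (beta : R -> 'I_4 -> R),
      orthonormal4 e1 e2 e3 e4 -> sphere_end_data e1 e2 e3 e4 beta ->
      parabolic_end (immersionS e1 e2 e3 e4 beta)).
Proof.
split.
- by move=> p e1 e2 e3 beta ON D; exact: euclid_case ON D.
- by move=> e1 e2 e3 e4 beta ON D; exact: sphere_case ON D.
Qed.
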